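(* Let $B\subset\mathbb{R}$ be a measurable set with Lebesgue measure $|B|=m\in(0,\infty)$, let $n\in\mathbb{N}$ and let $0<\delta<m/n$. Then there exist $x_1,\dots,x_{n+1}\in B$ such that $|x_i-x_j|/\delta\in\mathbb{N}=\{1,2,\dots\}$ for all $i\ne j$. *)

(* Defs.v *)
From HB Require Import structures.
From mathcomp Require Import all_boot all_order all_algebra.
From mathcomp Require Import all_classical all_reals all_analysis.

(* Main.v *)
Require Import Defs.
From HB Require Import structures.
From mathcomp Require Import all_boot all_order all_algebra.
From mathcomp Require Import all_classical all_reals all_analysis.
From mathcomp Require Import measurable_realfun.
Import Order.TTheory GRing.Theory Num.Theory.
Local Open Scope classical_set_scope.
Local Open Scope ring_scope.
From mathcomp Require Import lra.
Section S.
Context (R : realType).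
Local Notation mu := (@lebesgue_measure R).
Lemma lebesgue_shift (c : R) (A : set R) : measurable A ->
  mu ((fun x => x + c) @^-1` A) = mu A.
Proof.
move=> mA.
have mf : measurable_fun [set: measurableTypeR R] (fun x : measurableTypeR R => x + c : measurableTypeR R).
  by apply: measurable_realfun.measurable_funD => //; apply: measurable_cst.
have := @lebesgue_measure_unique R (pushforward mu (fun x : measurableTypeR R => x + c : measurableTypeR R)).
move/(_ mf) => H.
suff H' : forall X, ocitv X -> mu X = pushforward mu (fun x : measurableTypeR R => x + c : measurableTypeR R) X.
  by rewrite (H H' A mA).
move=> _ [[a b]] _ <-.
rewrite /pushforward.
have -> : (fun x => x + c) @^-1` `]a, b]%classic = `](a - c), (b - c)]%classic.
  by apply/seteqP; split => x /=; rewrite !in_itv /= ltrBlDr lerBrDr.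
rewrite !lebesgue_measure_itv /= !lte_fin ltrD2r.
by case: ifP => // _; rewrite -!EFinD opprB addrA subrK.
Qed.
Lemma step1 (B : set R) (m k d : R) : measurable B -> mu B = m%:E -> 0 < d -> k < m ->
  exists N : nat, (k%:E < mu (B `&` `[(-(N%:R*d))%R, (N%:R*d)%R[))%E.
Proof.
move=> mB hB d0 km.
pose F := fun N : nat => B `&` `[-(N%:R*d), N%:R*d[%classic.
have mF i : measurable (F i) by apply: measurableI.
have UF : \bigcup_n F n = B.
  apply/seteqP; split => [x [? _ []]//|x Bx].
  exists (Num.truncn (`|x| / d)).+1 => //; split => //=.
  have h := truncnS_gt (`|x| / d).
  rewrite ltr_pdivrMr // in h.
  rewrite in_itv /=; apply/andP; split.
    rewrite lerNl; apply: ltW; apply: le_lt_trans h; rewrite -normrN; exact: ler_norm.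
  apply: le_lt_trans h; exact: ler_norm.
have ndF : nondecreasing_seq F.
  move=> i j ij; apply/subsetPset => x [Bx]; rewrite /F /= !in_itv /= => /andP[h1 h2]; split => //.
  have : i%:R * d <= j%:R * d by rewrite ler_pM2r // ler_nat.
  by move=> h; apply/andP; split; [apply: le_trans h1; rewrite lerN2|apply: lt_le_trans h].
have L := nondecreasing_cvg_mu (mu:=mu) mF _ ndF.
rewrite UF in L; have /cvg_lim L2 := L mB.
apply: contrapT => /forallNP H.
have : (lim (mu \o F @ \oo) <= k%:E)%E.
  apply: lime_le; first by apply/cvg_ex; exists (mu B); exact: L mB.
  by near=> N; rewrite /= leNgt; apply/negP; apply: H.
rewrite L2 => h.
have : (m%:E <= k%:E)%E by rewrite -hB; exact: h.
by rewrite lee_fin leNgt km.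
exact: ereal_hausdorff.
Unshelve. all: by end_near.
Qed.
Lemma step2 (M : nat) (A : nat -> set R) (d : R) (n : nat) : 0 < d ->
  (forall j, measurable (A j)) -> (forall j, A j `<=` `[0%R, d[) ->
  ((n%:R * d)%:E < \sum_(j < M) mu (A j))%E ->
  exists t, n%:R < \sum_(j < M) (\1_(A j) t : R).
Proof.
move=> d0 mA sA hlt.
apply: contrapT => /forallNP H.
have mI : measurable (`[0%R, d[%classic : set R) by [].
have Hsum : (\sum_(j < M) mu (A j) = \int[mu]_(t in `[0%R, d[) (\sum_(j < M) (\1_(A j) t : R)%:E))%E.
  have mf : forall j : 'I_M, measurable_fun `[0%R, d[ (EFin \o (\1_(A j) : R -> R)).
    by move=> j; apply/measurable_EFinP; apply: measurable_indic.
  have f0 : forall (j : 'I_M) t, (`[0%R, d[%classic : set R) t -> (0 <= (\1_(A j) t : R)%:E)%E.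
    by move=> j t _; rewrite lee_fin.
  rewrite (ge0_integral_sum mu mI mf f0).
  apply: eq_bigr => j _; rewrite integral_indic //.
  by rewrite setIidl //; apply: sA.
  exact: mA.
move: hlt; rewrite Hsum => hlt.
have : (\int[mu]_(t in `[0%R, d[) (\sum_(j < M) (\1_(A j) t : R)%:E) <= \int[mu]_(t in `[0%R, d[) (cst (n%:R%:E)) t)%E.
  apply: ge0_le_integral => //.
  - by move=> t _; apply: sume_ge0 => j _; change ((0:R)%:E <= (\1_(A j) t : R)%:E)%E; rewrite lee_fin.
  - by apply: emeasurable_sum => j; apply/measurable_EFinP; apply: measurable_indic; exact: mA.
  move=> t _; rewrite sumEFin lee_fin leNgt; apply/negP; apply: H.
rewrite integral_cst // (_ : (_ * _)%E = (n%:R * d)%:E)%E.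
  by rewrite leNgt hlt.
rewrite EFinM; congr (_ * _)%E.
apply: eq_trans (lebesgue_measure_itv _) _.
by rewrite /= lte_fin d0 -EFinD subr0.
Qed.
End S.
Lemma shift_mfun (R : realType) (c : R) :
  measurable_fun [set: R] (fun x : R => x + c).
Proof. by apply: measurable_realfun.measurable_funD => //; apply: measurable_cst. Qed.

Theorem lemma9 (R : realType) (B : set R) (m : R) (n : nat) (delta : R)
  (hB : measurable B) (hBm : (lebesgue_measure B = m%:E)%E) (hm : 0 < m)
  (hn : (0 < n)%N) (hd0 : 0 < delta) (hd : delta < m / n%:R) :
  exists x : 'I_n.+1 -> R,
    (forall i, B (x i)) /\
    (forall i j : 'I_n.+1, i != j ->
       exists k : nat, (0 < k)%N /\ `|x i - x j| / delta = k%:R).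
Proof.
have nd : n%:R * delta < m.
  by move: hd; rewrite ltr_pdivlMr ?ltr0n // mulrC.
have [N hN] := @step1 R B m _ delta hB hBm hd0 nd.
set C := B `&` `[(-(N%:R*delta))%R, (N%:R*delta)%R[.
pose s := fun j : nat => (j%:R - N%:R) * delta.
pose F := fun j : nat => C `&` `[s j, s j + delta[%classic.
pose A := fun j : nat => (fun x => x + s j) @^-1` F j.
have mC : measurable C by apply: measurableI.
have mF j : measurable (F j) by apply: measurableI.
have mA j : measurable (A j).
  by rewrite /A -[X in measurable X]setTI; apply: shift_mfun.
have sA j : A j `<=` `[0%R, delta[.
  move=> x [_]; rewrite /= !in_itv /= => /andP[h1 h2].
  by apply/andP; split; lra.
have cover : C `<=` \big[setU/set0]_(k < N + N) F k.
  move=> x Cx; rewrite -bigcup_mkord.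
  have [Bx] := Cx; rewrite /= in_itv /= => /andP[h1 h2].
  set y := (x + N%:R * delta) / delta.
  have y0 : 0 <= y by rewrite divr_ge0 ?(ltW hd0) //; lra.
  exists (Num.truncn y).
    rewrite /= truncn_lt_nat // /y ltr_pdivrMr // natrD; lra.
  split => //; rewrite /= in_itv /=.
  have /andP[t1 t2] := truncn_itv y0.
  rewrite /s; move: (Num.truncn y) t1 t2 => j t1 t2.
  rewrite /y ler_pdivlMr // in t1; rewrite /y ltr_pdivrMr // -natr1 mulrDl mul1r in t2.
  rewrite mulrBl; apply/andP; split; lra.
have hsum : ((n%:R * delta)%:E < \sum_(j < N + N) lebesgue_measure (A j))%E.
  apply: (lt_le_trans hN).
  have := @content_subadditive _ _ _ lebesgue_measure C F (N + N) (fun k _ => mF k) mC cover.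
  move/le_trans; apply; rewrite le_eqVlt; apply/orP; left; apply/eqP.
  apply: eq_bigr => j _; apply/esym; exact: lebesgue_shift.
have [t ht] := @step2 R (N + N) A delta n hd0 mA sA hsum.
pose S := [set j : 'I_(N + N) | t \in A j]%SET.
have cardS : (n < #|S|)%N.
  move: ht; rewrite (eq_bigr (fun j => if j \in S then 1 else 0)); last first.
    by move=> j _; rewrite indicE inE; case: (t \in A j).
  by rewrite -big_mkcond sumr_const ltr_nat.
pose J := fun i : 'I_n.+1 => enum_val (widen_ord cardS i).
exists (fun i => t + s (J i)); split.
  move=> i; have := enum_valP (widen_ord cardS i); rewrite inE => /set_mem.
  by rewrite /A /F /C /= => -[[]].
move=> i i' ii'.
have JJ : J i != J i'.
  by apply: contra ii' => /eqP /enum_val_inj /(congr1 val) /= /val_inj ->.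
have -> : `|t + s (J i) - (t + s (J i'))| / delta = `|(J i)%:R - (J i')%:R : R|.
  rewrite /s (_ : _ - _ = ((J i)%:R - (J i')%:R) * delta); last by rewrite mulrBl; lra.
  by rewrite normrM (gtr0_norm hd0) mulfK ?gt_eqF.
have JJ' : nat_of_ord (J i) != nat_of_ord (J i') by [].
move: (nat_of_ord (J i)) (nat_of_ord (J i')) JJ' => a b JJ'.
case: (ltngtP a b) => hab.
- exists (b - a)%N; split; first by rewrite subn_gt0.
  rewrite -normrN opprB -natrB; last exact: ltnW hab.
  by rewrite ger0_norm.
- exists (a - b)%N; split; first by rewrite subn_gt0.
  rewrite -natrB; last exact: ltnW hab.
  by rewrite ger0_norm.
- by move: JJ'; rewrite hab eqxx.
Qed.
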